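(* Let $(a_k)_{k\ge1}$ be an increasing sequence of positive integers such that $\lim_{k\to\infty}a_{k+1}/a_k=\eta>1$ for some transcendental number $\eta$, and let $m\in\mathbb N$. Then there exists $\ell\in\mathbb N$ such that, writing $$S_{1,\ell}(\omega)=\sum_{k=1}^{\ell}\cos(2\pi a_k\omega),\qquad S_{\ell+1,n}(\omega)=\sum_{k=\ell+1}^{n}\cos(2\pi a_k\omega)$$ (the latter being $0$ if $n\le\ell$), for all $u,v\in\mathbb N$ with $u+v\le m$ and all $n\in\mathbb N$ we have $$\mathbb E\big[S_{1,\ell}^u S_{\ell+1,n}^v\big]=\mathbb E\big[S_{1,\ell}^u\big]\,\mathbb E\big[S_{\ell+1,n}^v\big],$$ where expectation is with respect to Lebesgue measure on $\omega\in[0,1]$. *)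

(* Defs.v *)
From HB Require Import structures.
From mathcomp Require Import all_boot all_order all_algebra.
From mathcomp Require Import all_classical all_reals all_analysis.
Set Implicit Arguments. Unset Strict Implicit. Unset Printing Implicit Defensive.
Import Order.TTheory GRing.Theory Num.Theory.
Local Open Scope ring_scope.

Definition algebraic (R : realType) (x : R) : Prop :=
  exists p : {poly rat}, p != 0 /\ root (map_poly ratr p) x.

Definition transcendental (R : realType) (x : R) : Prop := ~ algebraic x.

Definition Sblock (R : realType) (a : nat -> nat) (i j : nat) (w : R) : R :=
  \sum_(i <= k < j.+1) cos (2 * pi * (a k)%:R * w).

(* Main.v *)
Require Import Defs.
From HB Require Import structures.
From mathcomp Require Import all_boot all_order all_algebra.
From mathcomp Require Import all_classical all_reals all_analysis.
Import Order.TTheory GRing.Theory Num.Theory.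
Import numFieldNormedType.Exports.
Local Open Scope ring_scope.
Local Open Scope classical_set_scope.
From mathcomp Require Import ring lra zify.

Section Trig.
Variable R : realType.

Lemma sin_2piz (z : int) : sin (2 * pi * z%:~R) = 0 :> R.
Proof.
have H n : sin (2 * pi * n%:R) = 0 :> R.
  rewrite -[X in sin X]add0r (_ : 2 * pi * n%:R = pi *+ 2 *+ n).
    by rewrite periodicn ?sin0 //; exact: sinD2pi.
  by rewrite mulr_natr mulrC mulr_natr.
case: z => n; first exact: H.
by rewrite NegzE rmorphN /= mulrN sinN (H n.+1) oppr0.
Qed.

Lemma cont_ccos (c k : R) : continuous (fun w : R => c * cos (k * w)).
Proof.
move=> x; apply: cvgM; first exact: cvg_cst.
apply: (continuous_comp (f := fun w => k * w)); last exact: continuous_cos.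
by apply: cvgM; [exact: cvg_cst | exact: cvg_id].
Qed.

Lemma int_cos1 (c : R) (z : int) :
  lebesgue_measure.-integrable `[0%R, 1%R] (EFin \o (fun w : R => c * cos (2 * pi * z%:~R * w))) /\
  (\int[@lebesgue_measure R]_(w in `[0%R, 1%R]) (c * cos (2 * pi * z%:~R * w))%:E
    = (c * (z == 0)%:R)%:E)%E.
Proof.
split.
  apply: continuous_compact_integrable; first exact: segment_compact.
  by apply/continuous_subspaceT; exact: cont_ccos.
have [->|z0] := eqVneq z 0.
  under eq_integral do rewrite mulr0 mul0r cos0 mulr1.
  rewrite integral_cst /=; last exact: measurable_itv.
  rewrite lebesgue_measure_itv /= lte_fin ltr01.
  by rewrite oppr0 adde0 mule1 mulr1.

set k := 2 * pi * z%:~R.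
have k0 : k != 0 by rewrite /k mulf_neq0 ?intr_eq0 // mulf_neq0 // ?pnatr_eq0 // gt_eqF // pi_gt0.
pose F := fun w : R => c / k * sin (k * w).
have dF x : is_derive x (1:R) F (c * cos (k * x)).
  have h1 : is_derive x (1:R) (fun w : R => k * w) k.
    have := @is_deriveZ R R R id k x 1 1 (is_derive_id _ _).
    by rewrite /GRing.scale /= mulr1.
  have h2 := is_derive1_comp (is_derive_sin (k * x)) h1.
  have h3 := @is_deriveZ R R R _ (c / k) x 1 _ h2.
  apply: is_derive_eq h3 _.
  by rewrite /GRing.scale /= [cos _ * k]mulrC mulrA divfK.
have cF x : F @ x --> F x.
  apply/differentiable_continuous/derivable1_diffP; by case: (dF x).
rewrite (@continuous_FTC2 _ _ F 0 1).
- by rewrite /F mulr1 mulr0 sin0 /k sin_2piz !mulr0 -EFinB subr0.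
- by rewrite ltr01.
- by apply/continuous_subspaceT; exact: cont_ccos.
- split.
  + by move=> x _; case: (dF x).
  + exact: cvg_at_right_filter.
  + exact: cvg_at_left_filter.
- by move=> x _; rewrite derive1E; case: (dF x) => _ ->.
Qed.

Definition ev (s : seq (R * int)) (w : R) : R :=
  \sum_(p <- s) p.1 * cos (2 * pi * (p.2)%:~R * w).
Definition mn (s : seq (R * int)) : R := \sum_(p <- s) p.1 * (p.2 == 0)%:R.

Lemma int_ev s :
  lebesgue_measure.-integrable `[0%R, 1%R] (EFin \o ev s) /\
  (\int[@lebesgue_measure R]_(w in `[0%R, 1%R]) (ev s w)%:E = (mn s)%:E)%E.
Proof.
elim: s => [|p s [IHi IHe]].
  have e : ev [::] = (fun w => 0 * cos (2 * pi * (0:int)%:~R * w)).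
    by apply/funext => w; rewrite /ev big_nil mul0r.
  rewrite e; have [h1 h2] := int_cos1 0 0.
  by split => //; rewrite h2 /mn big_nil mul0r.
have e : ev (p :: s) = (fun w => p.1 * cos (2 * pi * (p.2)%:~R * w) + ev s w).
  by apply/funext => w; rewrite /ev big_cons.
have [h1 h2] := int_cos1 p.1 p.2.
pose f1 := fun w : R => p.1 * cos (2 * pi * (p.2)%:~R * w).
have e2 : EFin \o ev (p :: s) = (fun w => (EFin \o f1) w + (EFin \o ev s) w)%E.
  by apply/funext => w; rewrite e /= EFinD.
split; first by rewrite e2; apply: integrableD => //; exact: measurable_itv.
rewrite e; under eq_integral do rewrite EFinD.
rewrite (integralD _ h1 IHi); last exact: measurable_itv.
by rewrite h2 IHe /mn big_cons EFinD.
Qed.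

Fixpoint mul1 (p : R * int) (t : seq (R * int)) : seq (R * int) :=
  if t is q :: t' then
    (p.1 * q.1 / 2, p.2 + q.2) :: (p.1 * q.1 / 2, p.2 - q.2) :: mul1 p t'
  else [::].

Fixpoint prodl (s t : seq (R * int)) : seq (R * int) :=
  if s is p :: s' then mul1 p t ++ prodl s' t else [::].

Lemma ev_cat s t w : ev (s ++ t) w = ev s w + ev t w.
Proof. by rewrite /ev big_cat. Qed.

Lemma mn_cat s t : mn (s ++ t) = mn s + mn t.
Proof. by rewrite /mn big_cat. Qed.

Lemma cos_prod (x y : R) : cos x * cos y = (cos (x + y) + cos (x - y)) / 2.
Proof. by rewrite cosD cosB; field. Qed.

Lemma ev_mul1 p t w :
  ev (mul1 p t) w = p.1 * cos (2 * pi * (p.2)%:~R * w) * ev t w.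
Proof.
elim: t => [|q t IH] /=; first by rewrite /ev !big_nil mulr0.
rewrite /ev !big_cons -/(ev _ _) IH /= (mulrDr (p.1 * cos _)) -/(ev _ _) [in LHS]addrA; congr (_ + _).
set x := 2 * pi * (p.2)%:~R * w; set y := 2 * pi * (q.2)%:~R * w.
have -> : 2 * pi * (p.2 + q.2)%:~R * w = x + y by rewrite /x /y rmorphD /=; ring.
have -> : 2 * pi * (p.2 - q.2)%:~R * w = x - y by rewrite /x /y rmorphB /=; ring.
have -> : p.1 * cos x * (q.1 * cos y) = p.1 * q.1 * (cos x * cos y) by ring.
rewrite cos_prod; ring.
Qed.

Lemma ev_prodl s t w : ev (prodl s t) w = ev s w * ev t w.
Proof.
elim: s => [|p s IH].
  by rewrite /= /ev !big_nil mul0r.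
rewrite /= ev_cat IH ev_mul1 -mulrDl; congr (_ * _).
by rewrite /ev big_cons.
Qed.

Definition fcond (s t : seq (R * int)) :=
  forall p q, p \in s -> q \in t ->
    (p.2 + q.2 == 0) = (p.2 == 0) && (q.2 == 0) /\
    (p.2 - q.2 == 0) = (p.2 == 0) && (q.2 == 0).

Lemma mn_mul1 p t : (forall q, q \in t ->
    (p.2 + q.2 == 0) = (p.2 == 0) && (q.2 == 0) /\
    (p.2 - q.2 == 0) = (p.2 == 0) && (q.2 == 0)) ->
  mn (mul1 p t) = p.1 * (p.2 == 0)%:R * mn t.
Proof.
elim: t => [|q t IH] H; first by rewrite /mn /= !big_nil mulr0.
rewrite /= /mn !big_cons -/(mn _) /= IH; last by move=> r rt; apply: H; rewrite inE rt orbT.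
have [-> ->] := H q (mem_head _ _).
by rewrite -mulnb natrM -/(mn t); field.
Qed.

Lemma mn_prodl s t : fcond s t -> mn (prodl s t) = mn s * mn t.
Proof.
elim: s => [|p s IH] H; first by rewrite /mn /= !big_nil mul0r.
rewrite /= mn_cat mn_mul1; last by move=> q qt; apply: H => //; exact: mem_head.
rewrite IH; last by move=> p' q ps qt; apply: H => //; rewrite inE ps orbT.
by rewrite /mn big_cons -/(mn _) mulrDl.
Qed.
End Trig.
Arguments ev {R} s w.
Arguments mn {R} s.
Arguments mul1 {R} p t.
Arguments prodl {R} s t.
Arguments fcond {R} s t.

Lemma sum_if_eq (R0 : Type) (idx : R0) (op : Monoid.law idx) n k (F : nat -> R0) :
  (k < n)%N -> \big[op/idx]_(j < n) (if (j : nat) == k then F j else idx) = F k.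
Proof. by move=> kn; rewrite -big_mkcond big_ord1_eq kn. Qed.

Section Freq.
Variable R : realType.
Variable a : nat -> nat.

Definition A (lo hi u : nat) (z : int) := exists c : nat -> int,
  [/\ forall k, c k != 0 -> (lo <= k <= hi)%N,
      (\sum_(k < hi.+1) `|c k| <= u)%N &
      z = \sum_(k < hi.+1) c k * (a k)%:Z].

Lemma A0 lo hi : A lo hi 0 0.
Proof.
exists (fun _ => 0); split => //.
  by rewrite big1.
by rewrite big1 // => k _; rewrite mul0r.
Qed.

Lemma A_step lo hi u z k (e : int) : `|e|%N = 1%N -> A lo hi u z -> (lo <= k <= hi)%N ->
  A lo hi u.+1 (z + e * (a k)%:Z).
Proof.
move=> e1 [c [sc wc zc]] /andP[lok khi].
have khi' : (k < hi.+1)%N by [].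
exists (fun j => c j + (if j == k then e else 0)); split.
- move=> j; have [->|jk] := eqVneq j k; first by rewrite lok khi.
  by rewrite addr0; apply: sc.
- apply: (@leq_trans (\sum_(j < hi.+1) (`|c j| + (if (j : nat) == k then 1 else 0))%N)).
    apply: leq_sum => j _; case: eqP => _; lia.
  by rewrite big_split /= (@sum_if_eq _ _ _ _ _ (fun _ => 1%N)) // addn1.
- rewrite zc [RHS](eq_bigr (fun j : 'I_hi.+1 => c j * (a j)%:Z + (if (j : nat) == k then e * (a j)%:Z else 0))); last first.
    by move=> j _ /=; rewrite mulrDl; case: eqP => _; rewrite ?mul0r.
  by rewrite big_split /= (@sum_if_eq _ _ _ _ _ (fun j => e * (a j)%:Z)).
Qed.

Lemma A_neg lo hi u z : A lo hi u z -> A lo hi u (- z).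
Proof.
move=> [c [sc wc zc]]; exists (fun j => - c j); split.
- by move=> j; rewrite oppr_eq0; apply: sc.
- by under eq_bigr do rewrite abszN.
- by rewrite zc -sumrN; apply: eq_bigr => j _; rewrite mulNr.
Qed.

Definition bl (lo hi : nat) : seq (R * int) :=
  [seq (1, (a k)%:Z) | k <- index_iota lo hi.+1].

Lemma Sblock_ev lo hi w : Defs.Sblock a lo hi w = ev (bl lo hi) w.
Proof.
rewrite /Defs.Sblock /ev /bl big_map; apply: eq_bigr => k _ /=.
by rewrite mul1r -pmulrn.
Qed.

Fixpoint pw (u : nat) (b : seq (R * int)) : seq (R * int) :=
  if u is u'.+1 then prodl (pw u' b) b else [:: (1, 0)].

Lemma ev_pw u b w : ev (pw u b) w = ev b w ^+ u.
Proof.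
elim: u => [|u IH] /=.
  by rewrite /ev big_cons big_nil /= mulr0 mul0r cos0 mulr1 addr0 expr0.
by rewrite ev_prodl IH exprSr.
Qed.

Lemma mem_mul1 (p : R * int) t r : r \in mul1 p t ->
  exists2 q, q \in t & (r.2 = p.2 + q.2 \/ r.2 = p.2 - q.2).
Proof.
elim: t => [|q t IH] //=.
rewrite !inE => /orP[/eqP->|/orP[/eqP->|/IH[q' q't H]]].
- by exists q; [exact: mem_head | left].
- by exists q; [exact: mem_head | right].
- by exists q' => //; rewrite inE q't orbT.
Qed.

Lemma mem_prodl (s t : seq (R * int)) r : r \in prodl s t ->
  exists2 p, p \in s & exists2 q, q \in t & (r.2 = p.2 + q.2 \/ r.2 = p.2 - q.2).
Proof.
elim: s => [|p s IH] //=.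
rewrite mem_cat => /orP[/mem_mul1[q qt H]|/IH[p' p's H]].
- by exists p; [exact: mem_head | exists q].
- by exists p' => //; rewrite inE p's orbT.
Qed.

Lemma pw_freq u lo hi r : r \in pw u (bl lo hi) -> A lo hi u r.2.
Proof.
elim: u r => [|u IH] r /=.
  by rewrite inE => /eqP->; exact: A0.
move=> /mem_prodl[p /IH Ap [q qb H]].
case/mapP: qb => k; rewrite mem_index_iota => kr qE; subst q.
have kr' : (lo <= k <= hi)%N by rewrite ltnS in kr.
case: H => -> /=.
  by have := @A_step _ _ _ _ _ 1 (erefl _) Ap kr'; rewrite mul1r.
by have := @A_step _ _ _ _ _ (-1) (erefl _) Ap kr'; rewrite mulN1r.
Qed.
End Freq.

Lemma sum_widen (R0 : Type) (idx : R0) (op : Monoid.law idx) n1 n2 (F : nat -> R0) :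
  (n1 <= n2)%N -> (forall k, (n1 <= k < n2)%N -> F k = idx) ->
  \big[op/idx]_(k < n1) F k = \big[op/idx]_(k < n2) F k.
Proof.
move=> h12 hF; rewrite -!(big_mkord xpredT) (big_cat_nat (leq0n n1) h12) /=.
rewrite [X in _ = op _ X]big1_seq ?Monoid.mulm1 // => i /andP[_].
by rewrite mem_index_iota => /hF.
Qed.

Section NT.
Variable R : realType.
Variable a : nat -> nat.
Variable eta : R.
Hypothesis apos : forall k, (1 <= k)%N -> (0 < a k)%N.
Hypothesis ainc : forall k, (1 <= k)%N -> (a k < a k.+1)%N.
Hypothesis acvg : (fun k : nat => ((a k.+1)%:R / (a k)%:R : R)) @ \oo --> eta.
Hypothesis eta1 : 1 < eta.
Hypothesis etr : transcendental eta.

Lemma amono i j : (1 <= i)%N -> (i <= j)%N -> (a i <= a j)%N.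
Proof.
move=> i1; elim: j => [|j IH]; first by rewrite leqn0 => /eqP i0; rewrite i0 in i1.
rewrite leq_eqVlt => /orP[/eqP->//|]; rewrite ltnS => ij.
exact: leq_trans (IH ij) (ltnW (ainc _ (leq_trans i1 ij))).
Qed.

Lemma apos' k : (1 <= k)%N -> 0 < (a k)%:R :> R.
Proof. by move=> k1; rewrite ltr0n apos. Qed.

Lemma ratio_cvg j : (fun n => (a (n + j))%:R / (a n)%:R : R) @ \oo --> eta ^+ j.
Proof.
elim: j => [|j IH].
  apply: cvg_near_cst; near=> n.
  rewrite addn0 expr0 divff // gt_eqF // apos' //.
  near: n; by exists 1%N.
have h1 : (fun n => (a (n + j).+1)%:R / (a (n + j))%:R : R) @ \oo --> eta.
  by rewrite (cvg_shiftn j (fun k => (a k.+1)%:R / (a k)%:R : R)).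
have h2 := cvgM h1 IH.
rewrite exprS.
apply: (cvg_trans _ (h2 _)); apply: near_eq_cvg; near=> n.
rewrite /= addnS mulrA divfK // gt_eqF // apos' //.
near: n; exists 1%N => // n /= n1; exact: leq_trans n1 (leq_addr _ _).
Unshelve. all: by end_near.
Qed.

Lemma ratio_unif D (eps : R) : 0 < eps -> exists N, (1 <= N)%N /\
  forall n, (N <= n)%N -> forall j, (j <= D)%N ->
    `|(a (n + j))%:R / (a n)%:R - eta ^+ j| < eps.
Proof.
move=> e0; elim: D => [|D [N1 [N11 HN1]]].
  have := proj1 (cvgrPdist_lt _ _) (ratio_cvg 0) eps e0 => -[N _ HN].
  exists N.+1; split => // n Nn j; rewrite leqn0 => /eqP ->.
  by rewrite distrC; apply: HN => /=; exact: ltnW.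
have := proj1 (cvgrPdist_lt _ _) (ratio_cvg D.+1) eps e0 => -[N2 _ HN2].
exists (maxn N1 N2); split; first by rewrite leq_max N11.
move=> n; rewrite geq_max => /andP[n1 n2] j; rewrite leq_eqVlt => /orP[/eqP ->|].
  by rewrite distrC; apply: HN2.
by rewrite ltnS; apply: HN1.
Qed.

Lemma eta_pos : 0 < eta.
Proof. exact: lt_trans ltr01 eta1. Qed.

Lemma eta_ge1 j : 1 <= eta ^+ j.
Proof. by apply: exprn_ege1; exact: ltW. Qed.

Lemma eta_big (M : R) : exists d, M < eta ^+ d.
Proof.
have bern d : 1 + d%:R * (eta - 1) <= eta ^+ d.
  elim: d => [|d IH]; first by rewrite mul0r addr0 expr0.
  rewrite exprS; have h : 0 <= eta - 1 by rewrite subr_ge0 ltW.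
  have e0 := eta_pos.
  have : eta * (1 + d%:R * (eta - 1)) <= eta * eta ^+ d by rewrite ler_pM2l.
  apply: le_trans; rewrite -natr1.
  have : 0 <= d%:R * (eta - 1) * (eta - 1) by rewrite mulr_ge0 // mulr_ge0.
  nra.
have h0 : 0 <= `|M| / (eta - 1) by rewrite divr_ge0 // subr_ge0 ltW.
have := archi_boundP h0; set n := Num.Def.archi_bound _ => hn.
exists n; apply: lt_le_trans (bern n).
have e1 : 0 < eta - 1 by rewrite subr_gt0.
rewrite ltr_pdivrMr // in hn.
have := ler_norm M; nra.
Qed.

Lemma fin_min (T : finType) (P : pred T) (f : T -> R) :
  (forall t, P t -> 0 < f t) -> exists d, 0 < d /\ forall t, P t -> d <= f t.
Proof.
move=> fpos.
suff [d [d0 H]] : exists d, 0 < d /\ forall t, t \in enum T -> P t -> d <= f t.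
  by exists d; split => // t; apply: H; rewrite mem_enum.
elim: (enum T) => [|x s [d [d0 H]]]; first by exists 1.
exists (if P x then Num.min d (f x) else d); split.
  by case: ifP => Px //; rewrite lt_min d0 fpos.
move=> t; rewrite inE => /orP[/eqP->|ts] Pt.
  by rewrite Pt ge_min lexx orbT.
case: ifP => _; last exact: H.
by rewrite ge_min H.
Qed.

Lemma trans_nz d (E : 'I_d.+1 -> int) : E ord_max != 0 ->
  \sum_(j < d.+1) (E j)%:~R * eta ^+ j != 0.
Proof.
move=> Enz; apply/negP => /eqP H; apply: etr.
exists (\poly_(i < d.+1) ((E (inord i))%:~R : rat)); split.
  apply/eqP => p0; have := congr1 (fun p : {poly rat} => p`_d) p0.
  rewrite coef_poly ltnSn coef0 => /eqP; rewrite intr_eq0.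
  have -> : (inord d : 'I_d.+1) = ord_max by apply: val_inj; rewrite /= inordK.
  by rewrite (negbTE Enz).
have -> : map_poly ratr (\poly_(i < d.+1) ((E (inord i))%:~R : rat)) =
    \poly_(i < d.+1) ((E (inord i))%:~R : R).
  apply/polyP => i; rewrite coef_map !coef_poly; case: ifP => _.
    exact: ratr_int.
  exact: raddf0.
rewrite /root horner_poly; apply/eqP; rewrite -[RHS]H; apply: eq_bigr => i _.
by rewrite inord_val.
Qed.

Definition valc (c : nat -> int) L : R := \sum_(k < L.+1) (c k)%:~R * (a k)%:R.
Definition wt (c : nat -> int) L : nat := (\sum_(k < L.+1) `|c k|)%N.

Lemma wt_ge c L k : (k <= L)%N -> (`|c k| <= wt c L)%N.
Proof.
move=> kL; rewrite /wt (bigD1 (Ordinal (kL : (k < L.+1)%N))) //=.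
exact: leq_addr.
Qed.

Lemma normr_intr (x : int) : `|x%:~R : R| = (`|x|%N)%:R.
Proof. by rewrite -intr_norm natr_absz. Qed.

Lemma claim w : exists l (del : R), 0 < del /\ forall L c, (l < L)%N -> c 0%N = 0 ->
  c L != 0 -> (wt c L <= w)%N -> del * (a L)%:R <= `|valc c L|.
Proof.
elim: w => [|w [l0 [d0 [d00 IH]]]].
  exists 0%N, 1; split => // L c _ _ cL wt0.
  have := wt_ge c L L (leqnn L); rewrite leqn0 in wt0; rewrite (eqP wt0) leqn0 absz_eq0.
  by rewrite (negbTE cL).
set K := w.+1.
have K0 : 0 < K%:R :> R by rewrite ltr0n.
have [d hd] : exists d, 4 * K%:R / d0 < eta ^+ d.+1.
  have [d hd] := eta_big (4 * K%:R / d0); exists d; apply: lt_le_trans hd _.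
  rewrite exprS; have := eta_ge1 d; have := eta1; nra.
pose T := {ffun 'I_d.+1 -> 'I_(K + K).+1}.
pose P := fun t : T => (nat_of_ord (t ord_max) != K).
pose f := fun t : T => `|\sum_(j < d.+1) ((t j)%:Z - K%:Z)%:~R * eta ^+ j|.
have [ds [ds0 Hds]] : exists ds, 0 < ds /\ forall t, P t -> ds <= f t.
  apply: fin_min => t Pt; rewrite normr_gt0; apply: trans_nz.
  by rewrite subr_eq0 eqz_nat.
pose eps := Num.min (1/2) (ds / (2 * K%:R)).
have eps0 : 0 < eps by rewrite lt_min; apply/andP; split; [lra|apply: divr_gt0 => //; lra].
have [N0 [N01 HN]] := ratio_unif d.+1 eps eps0.
exists (l0 + N0 + d.+1)%N, (Num.min (d0 / 2) (ds / (2 * (eta ^+ d + 1)))); split.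
  have e1 := eta_ge1 d; rewrite lt_min; apply/andP; split; apply: divr_gt0 => //; lra.
move=> L c lL c0 cL wtc.
have [/existsP[k /andP[/andP[k1 kd] ck]] | /existsP nofar] :=
  boolP [exists k : 'I_L.+1, ((1 <= k)%N && (k + d.+1 <= L)%N) && (c k != 0)].
-
  pose c' := fun j : nat => if j == (k : nat) then 0 else c j.
  have kL : (k < L)%N by lia.
  have Lk : (L == k) = false := gtn_eqF kL.
  have ew : (wt c' L + `|c k|)%N = wt c L.
    rewrite /wt (bigD1 k) //= [X in _ = X](bigD1 k) //= /c' eqxx absz0 add0n addnC.
    by congr (_ + _)%N; apply: eq_bigr => j jk; rewrite ifN.
  have ev : valc c L = valc c' L + (c k)%:~R * (a k)%:R.
    rewrite /valc (bigD1 k) //= [X in _ = X + _](bigD1 k) //= /c' eqxx mul0r add0r addrC.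
    by congr (_ + _); apply: eq_bigr => j jk; rewrite ifN.
  have ck1 : (1 <= `|c k|)%N by rewrite absz_gt0.
  have wtc' : (wt c' L <= w)%N by rewrite /K in wtc; lia.
  have hIH : d0 * (a L)%:R <= `|valc c' L|.
    apply: IH => //; first by lia.
      by rewrite /c'; case: ifP.
    by rewrite /c' Lk.
  set n' := (L - d.+1)%N.
  have hn' : (N0 <= n')%N by rewrite /n'; lia.
  have hr := HN n' hn' d.+1 (leqnn _).
  rewrite (_ : (n' + d.+1 = L)%N) in hr; last by rewrite /n'; lia.
  have hak : (a k <= a n')%N by apply: amono; rewrite /n'; lia.
  have an'0 : 0 < (a n')%:R :> R by apply: apos'; lia.
  have ckK : (`|c k| <= K)%N by apply: leq_trans (wt_ge c L k (ltnW kL)) wtc.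
  set x := (a L)%:R : R; set y := (a n')%:R : R; set z := (a k)%:R : R.
  set q := (`|c k|%N)%:R : R.
  have zy : z <= y by rewrite ler_nat.
  have qK : q <= K%:R by rewrite ler_nat.
  have q0 : 0 <= q by [].
  have z0 : 0 <= z by [].
  have epsh : eps <= 1/2 by rewrite ge_min lexx.
  have E1 := eta_ge1 d.+1.
  have hxy : (eta ^+ d.+1 - eps) * y < x.
    move: hr; rewrite ltr_distl => /andP[+ _].
    by rewrite ltr_pdivlMr.
  have hd' : 4 * K%:R < eta ^+ d.+1 * d0 by rewrite -ltr_pdivrMr.
  have h1 : 4 * K%:R * y < eta ^+ d.+1 * d0 * y by rewrite ltr_pM2r.
  have h0 : 0 <= (eta ^+ d.+1 - 1) * y by apply: mulr_ge0; [lra | exact: ltW].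
  have h2 : eta ^+ d.+1 * y <= 2 * x by nra.
  have h3 : d0 * (eta ^+ d.+1 * y) <= d0 * (2 * x) by rewrite ler_pM2l.
  have h4 : q * z <= K%:R * y by apply: ler_pM.
  have hn : `|(c k)%:~R * z| = q * z by rewrite normrM normr_intr ger0_norm.
  have hx0 : 0 <= x by [].
  rewrite ev; apply: le_trans (lerB_normD _ _).
  apply: (@le_trans _ _ (d0 / 2 * x)).
    by apply: ler_wpM2r => //; rewrite ge_min lexx.
  rewrite hn; nra.
-
  have Ld : (d < L)%N by lia.
  set n := (L - d)%N.
  have hL : L.+1 = (n + d.+1)%N by rewrite /n; lia.
  have hnd : (n + d)%N = L by rewrite /n; lia.
  have cz : forall i, (i < n)%N -> c i = 0.
    move=> [|i] hi; first exact: c0.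
    apply/eqP; apply/negPn/negP => ci; apply: nofar.
    have hiL : (i.+1 < L.+1)%N by rewrite /n in hi; lia.
    exists (Ordinal hiL); rewrite /= ci andbT; rewrite /n in hi; lia.
  have hval : valc c L = \sum_(j < d.+1) (c (n + j)%N)%:~R * (a (n + j)%N)%:R.
    rewrite /valc hL big_split_ord /= big1 ?add0r // => i _.
    by rewrite cz ?mul0r // ltn_ord.
  have hwt : (\sum_(j < d.+1) `|c (n + j)%N| <= K)%N.
    apply: leq_trans wtc; rewrite /wt hL big_split_ord /=; exact: leq_addl.
  have hcb j : (j <= d)%N -> (`|c (n + j)%N| <= K)%N.
    move=> jd; apply: leq_trans hwt.
    by rewrite (bigD1 (Ordinal (jd : (j < d.+1)%N))) //= leq_addr.
  pose t : T := [ffun j : 'I_d.+1 => inord `|(c (n + j)%N + K%:Z)%R|%N].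
  have tE (j : 'I_d.+1) : ((t j)%:Z - K%:Z) = c (n + j)%N.
    have h := hcb j (ltn_ord j); rewrite ffunE inordK; lia.
  have Pt : P t.
    have := hcb d (leqnn d); rewrite /P ffunE hnd /= => h.
    move/eqP: cL => cL'; rewrite inordK; lia.
  have hds := Hds t Pt; rewrite /f in hds.
  have e : \sum_(j < d.+1) ((t j)%:Z - K%:Z)%:~R * eta ^+ j =
           \sum_(j < d.+1) (c (n + j)%N)%:~R * eta ^+ j.
    by apply: eq_bigr => j _; rewrite tE.
  rewrite e in hds.
  have hnN : (N0 <= n)%N by rewrite /n; lia.
  have an0 : 0 < (a n)%:R :> R by apply: apos'; lia.
  set y := (a n)%:R : R.
  set V := \sum_(j < d.+1) (c (n + j)%N)%:~R * eta ^+ j.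
  set W := \sum_(j < d.+1) (c (n + j)%N)%:~R * ((a (n + j)%N)%:R / y).
  have hvW : valc c L = y * W.
    rewrite hval /W mulr_sumr; apply: eq_bigr => j _.
    by rewrite mulrCA [y * _]mulrC divfK // gt_eqF.
  have hWV : `|W - V| <= K%:R * eps.
    rewrite /W /V -sumrB; apply: le_trans (ler_norm_sum _ _ _) _.
    apply: (@le_trans _ _ (\sum_(j < d.+1) (`|c (n + j)%N|%N)%:R * eps)).
      apply: ler_sum => j _; rewrite -mulrBr normrM normr_intr ler_wpM2l //.
      by apply: ltW; apply: HN => //; exact: ltnW (ltn_ord j).
    by rewrite -mulr_suml -natr_sum ler_wpM2r // ?ler_nat // ltW.
  have Keps : K%:R * eps <= ds / 2.
    have : eps <= ds / (2 * K%:R) by rewrite ge_min lexx orbT.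
    rewrite ler_pdivlMr; last by lra.
    move=> h; rewrite (_ : K%:R * eps = eps * (2 * K%:R) / 2); last by field.
    by apply: ler_wpM2r => //; rewrite invr_ge0; lra.
  have hW : ds / 2 <= `|W|.
    have := ler_normB W (W - V); rewrite opprB addrCA subrr addr0.
    lra.
  have E1 := eta_ge1 d.
  have haL : (a L)%:R <= (eta ^+ d + 1) * y.
    have := HN n hnN d (leqnSn d); rewrite hnd ltr_distl => /andP[_].
    rewrite ltr_pdivrMr // => h.
    have epsh : eps <= 1/2 by rewrite ge_min lexx.
    apply: ltW; apply: lt_le_trans h _; apply: ler_wpM2r; [exact: ltW an0 | lra].
  rewrite hvW normrM (ger0_norm (ltW an0)).
  apply: (@le_trans _ _ (ds / (2 * (eta ^+ d + 1)) * (a L)%:R)).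
    by apply: ler_wpM2r => //; rewrite ge_min lexx orbT.
  have h1 : ds / (2 * (eta ^+ d + 1)) * (a L)%:R <=
            ds / (2 * (eta ^+ d + 1)) * ((eta ^+ d + 1) * y).
    by apply: ler_wpM2l => //; apply: divr_ge0; lra.
  have h2 : ds / (2 * (eta ^+ d + 1)) * ((eta ^+ d + 1) * y) = ds / 2 * y.
    by field; lra.
  have h3 : ds / 2 * y <= `|W| * y by apply: ler_wpM2r => //; exact: ltW.
  rewrite [y * _]mulrC; lra.
Qed.

End NT.


Section NT2.
Variable R : realType.
Variable a : nat -> nat.
Variable eta : R.
Hypothesis apos : forall k, (1 <= k)%N -> (0 < a k)%N.
Hypothesis ainc : forall k, (1 <= k)%N -> (a k < a k.+1)%N.
Hypothesis acvg : (fun k : nat => ((a k.+1)%:R / (a k)%:R : R)) @ \oo --> eta.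
Hypothesis eta1 : 1 < eta.
Hypothesis etr : transcendental eta.


Lemma knt m : exists l, (1 <= l)%N /\ forall N (c : nat -> int), c 0%N = 0 ->
  (forall k, (N <= k)%N -> c k = 0) -> (\sum_(k < N) `|c k| <= m)%N ->
  \sum_(k < N) c k * (a k)%:Z = 0 -> forall k, (l < k)%N -> c k = 0.
Proof.
have [l [del [del0 H]]] := claim R a eta apos ainc acvg eta1 etr m.
exists l.+1; split => // N c c0 cN wN sN k lk.
apply/eqP; apply/negPn/negP => ck.
have kN : (k < N)%N.
  by rewrite ltnNge; apply/negP => Nk; move: ck; rewrite cN.
have exP : exists i, (i < N)%N && (c i != 0) by exists k; rewrite kN ck.
have ubP : forall i, (i < N)%N && (c i != 0) -> (i <= N)%N.
  by move=> i /andP[iN _]; exact: ltnW.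
case: (ex_maxnP exP ubP) => L /andP[LN cL] Lmax.
have kL : (k <= L)%N by apply: Lmax; rewrite kN ck.
have cgt : forall j, (L.+1 <= j < N)%N -> c j = 0.
  move=> j /andP[Lj jN]; apply/eqP; apply/negPn/negP => cj.
  by have := Lmax j; rewrite jN cj => /(_ isT); rewrite leqNgt Lj.
have LN' : (L.+1 <= N)%N by [].
have hs : \sum_(k < N) c k * (a k)%:Z = \sum_(k < L.+1) c k * (a k)%:Z.
  by rewrite (@sum_widen _ _ _ _ _ (fun k => c k * (a k)%:Z) LN') // => j /cgt ->; rewrite mul0r.
have hw : (\sum_(k < N) `|c k| = wt c L)%N.
  by rewrite /wt (@sum_widen _ _ _ _ _ (fun k => `|c k|%N) LN') // => j /cgt ->.
have hv : valc R a c L = ((\sum_(k < L.+1) c k * (a k)%:Z)%:~R : R).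
  rewrite /valc rmorph_sum; apply: eq_bigr => i _.
  by rewrite rmorphM /= -pmulrn.
have := H L c ltac:(lia) c0 cL ltac:(by rewrite -hw).
rewrite hv -hs sN /= normr0.
have aL : 0 < (a L)%:R :> R by apply: (apos' R a apos); lia.
move=> h; have : 0 < del * (a L)%:R by apply: mulr_gt0.
by rewrite ltNge h.
Qed.
End NT2.

Lemma supp0 (c : nat -> int) lo hi k : (forall k, c k != 0 -> (lo <= k <= hi)%N) ->
  ~~ (lo <= k <= hi)%N -> c k = 0.
Proof. by move=> sc hk; apply/eqP; exact: (contraNT (sc k) hk). Qed.
Arguments supp0 {c lo hi k}.

Lemma sep (a : nat -> nat) (m l : nat)
  (Hk : forall N (c : nat -> int), c 0%N = 0 ->
    (forall k, (N <= k)%N -> c k = 0) -> (\sum_(k < N) `|c k| <= m)%N ->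
    \sum_(k < N) c k * (a k)%:Z = 0 -> forall k, (l < k)%N -> c k = 0)
  u v n z y : (u + v <= m)%N -> A a 1 l u z -> A a l.+1 n v y -> z + y = 0 -> y = 0.
Proof.
move=> uvm [c1 [s1 w1 z1]] [c2 [s2 w2 y1]] zy.
have c2z : forall k, (k <= l)%N -> c2 k = 0.
  by move=> k kl; apply: (supp0 s2); rewrite negb_and -ltnNge ltnS kl.
have c1z : forall k, (l < k)%N -> c1 k = 0.
  by move=> k kl; apply: (supp0 s1); rewrite negb_and -!ltnNge kl orbT.
suff c2all : forall k, c2 k = 0 by rewrite y1 big1 // => k _; rewrite c2all mul0r.
case: (leqP n l) => nl.
  move=> k; case: (leqP k l) => kl; first exact: c2z.
  by apply: (supp0 s2); rewrite negb_and -!ltnNge (leq_ltn_trans nl kl) orbT.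
pose c := fun k => c1 k + c2 k.
have hN : (l.+1 <= n.+1)%N by rewrite ltnS ltnW.
have hs1 : \sum_(k < l.+1) c1 k * (a k)%:Z = \sum_(k < n.+1) c1 k * (a k)%:Z.
  by apply: (@sum_widen _ _ _ _ _ (fun k => c1 k * (a k)%:Z) hN) => k /andP[hk _];
    rewrite c1z ?mul0r.
have hw1 : (\sum_(k < l.+1) `|c1 k| = \sum_(k < n.+1) `|c1 k|)%N.
  by apply: (@sum_widen _ _ _ _ _ (fun k => `|c1 k|%N) hN) => k /andP[hk _];
    rewrite c1z.
have hc := Hk n.+1 c.
have ck : forall k, (l < k)%N -> c k = 0.
  apply: hc.
  - rewrite /c c2z // (supp0 s1) //.
  - move=> k nk; rewrite /c c1z; last by apply: leq_trans nk; exact: ltnW.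
    by rewrite add0r; apply: (supp0 s2); rewrite negb_and -!ltnNge nk orbT.
  - apply: (@leq_trans (\sum_(k < n.+1) (`|c1 k| + `|c2 k|))%N).
      by apply: leq_sum => k _; rewrite /c; lia.
    rewrite big_split /= -hw1; exact: leq_trans (leq_add w1 w2) uvm.
  - rewrite /c (eq_bigr (fun k : 'I_n.+1 => c1 k * (a k)%:Z + c2 k * (a k)%:Z)); last first.
      by move=> k _; rewrite mulrDl.
    by rewrite big_split /= -hs1 -z1 -y1.
move=> k; case: (leqP k l) => kl; first exact: c2z.
by have := ck k kl; rewrite /c c1z // add0r.
Qed.

Theorem lemma2p2 (R : realType) (a : nat -> nat) (eta : R) (m : nat) :
  (forall k, (1 <= k)%N -> (0 < a k)%N) ->
  (forall k, (1 <= k)%N -> (a k < a k.+1)%N) ->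
  (fun k : nat => ((a k.+1)%:R / (a k)%:R : R)) @ \oo --> eta ->
  1 < eta ->
  transcendental eta ->
  exists l : nat, (1 <= l)%N /\
    forall u v n : nat, (u + v <= m)%N ->
      (\int[@lebesgue_measure R]_(w in `[0%R, 1%R])
          ((Sblock a 1 l w) ^+ u * (Sblock a l.+1 n w) ^+ v)%:E
       = (\int[@lebesgue_measure R]_(w in `[0%R, 1%R]) ((Sblock a 1 l w) ^+ u)%:E)
         * (\int[@lebesgue_measure R]_(w in `[0%R, 1%R]) ((Sblock a l.+1 n w) ^+ v)%:E))%E.
Proof.
move=> apos ainc acvg eta1 etr.
have [l [l1 Hk]] := knt R a eta apos ainc acvg eta1 etr m.
exists l; split => // u v n uvm.
pose s := pw R u (bl R a 1 l); pose t := pw R v (bl R a l.+1 n).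
have E1 w : Sblock a 1 l w ^+ u = ev s w by rewrite Sblock_ev ev_pw.
have E2 w : Sblock a l.+1 n w ^+ v = ev t w by rewrite Sblock_ev ev_pw.
have I0 : (\int[@lebesgue_measure R]_(w in `[0%R, 1%R])
          ((Sblock a 1 l w) ^+ u * (Sblock a l.+1 n w) ^+ v)%:E = (mn (prodl s t))%:E)%E.
  rewrite -(proj2 (int_ev R (prodl s t))); apply: eq_integral => w _.
  by rewrite ev_prodl E1 E2.
have I1 : (\int[@lebesgue_measure R]_(w in `[0%R, 1%R]) ((Sblock a 1 l w) ^+ u)%:E
          = (mn s)%:E)%E.
  rewrite -(proj2 (int_ev R s)); apply: eq_integral => w _.
  by rewrite E1.
have I2 : (\int[@lebesgue_measure R]_(w in `[0%R, 1%R]) ((Sblock a l.+1 n w) ^+ v)%:E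
          = (mn t)%:E)%E.
  rewrite -(proj2 (int_ev R t)); apply: eq_integral => w _.
  by rewrite E2.
rewrite I0 I1 I2 -EFinM mn_prodl //.
move=> p q ps qt.
have Ap := pw_freq R a u 1 l p ps.
have Aq := pw_freq R a v l.+1 n q qt.
have key y' : A a l.+1 n v y' -> (p.2 + y' == 0) = (p.2 == 0) && (y' == 0).
  move=> Ay; apply/idP/idP.
    move/eqP => h; have y0 := @sep a m l Hk u v n _ _ uvm Ap Ay h.
    by move: h; rewrite y0 addr0 => ->; rewrite eqxx.
  by case/andP => /eqP -> /eqP ->; rewrite addr0.
split; first exact: key.
by rewrite key ?oppr_eq0 //; exact: A_neg.
Qed.
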